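(* Fix constants $\lambda_1,\ldots,\lambda_K\ge 0$ and $\mu_1,\ldots,\mu_M\ge 0$, and for a channel realization $\boldsymbol{\alpha}$ consider the problem $$\max_{p_1,\ldots,p_K\ge 0}\ \log\Big(1+\sum_{k=1}^K h_kp_k\Big)-\sum_{k=1}^K\lambda_kp_k-\sum_{m=1}^M\mu_m\sum_{k=1}^K g_{km}p_k .$$ For almost every realization $\boldsymbol{\alpha}$ the following holds: if $(p_1^*,\ldots,p_K^* )$ is an optimal solution with $p_i^*>0$ for some user $i$ and $p_j^*=0$ for every $j\neq i$, then $$\frac{h_i}{\lambda_i+\sum_{m=1}^M\mu_m g_{im}}\ \ge\ \frac{h_j}{\lambda_j+\sum_{m=1}^M\mu_m g_{jm}}\quad\forall j\neq i,$$ and $$p_i^*=\Big(\frac{1}{\lambda_i+\sum_{m=1}^M\mu_m g_{im}}-\frac{1}{h_i}\Big)^+ .$$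
   Context: $\boldsymbol{\alpha}=(h_1,\ldots,h_K,g_{11},\ldots,g_{KM})$ is a random vector of nonnegative channel power gains ($h_k$: secondary user $k$ to secondary base station; $g_{km}$: secondary user $k$ to primary receiver $m$) with a continuous, differentiable joint cumulative distribution function, the $h_k$'s and $g_{km}$'s being independent. $(x)^+=\max(0,x)$. *)

(* Defs.v *)
From HB Require Import structures.
From mathcomp Require Import all_boot all_order all_algebra.
From mathcomp Require Import all_classical all_reals all_analysis.
Set Implicit Arguments. Unset Strict Implicit. Unset Printing Implicit Defensive.
Import Order.TTheory GRing.Theory Num.Theory.
Import numFieldNormedType.Exports.
Local Open Scope classical_set_scope.
Local Open Scope ring_scope.

(* The channel vector alpha = (h_1..h_K, g_11..g_KM) is a row vector of
   length K + K*M; the first K entries are the h_k, the rest the g_km. *)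
Definition hidx (K M : nat) (k : 'I_K) : 'I_(K + K * M) := lshift (K * M) k.
Definition gidx (K M : nat) (k : 'I_K) (m : 'I_M) : 'I_(K + K * M) :=
  rshift K (mxvec_index k m).

Definition hval {R : realType} (K M : nat) (a : 'rV[R]_(K + K * M)) (k : 'I_K) : R :=
  a ord0 (hidx M k).
Definition gval {R : realType} (K M : nat) (a : 'rV[R]_(K + K * M))
  (k : 'I_K) (m : 'I_M) : R := a ord0 (gidx k m).

Definition joint_cdf {R : realType} {d} {T : measurableType d} (n : nat)
  (P : probability T R) (X : T -> 'rV[R]_n) (x : 'rV[R]_n) : R :=
  fine (P [set w | forall j : 'I_n, X w ord0 j <= x ord0 j]).

Definition indep_components {R : realType} {d} {T : measurableType d} (n : nat)
  (P : probability T R) (X : T -> 'rV[R]_n) : Prop :=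
  forall B : 'I_n -> set R, (forall j, measurable (B j)) ->
    P (\bigcap_(j in [set: 'I_n]) [set w | B j (X w ord0 j)])
    = (\prod_(j < n) P [set w | B j (X w ord0 j)])%E.

Definition objective {R : realType} (K M : nat) (lam : 'I_K -> R) (mu : 'I_M -> R)
  (h : 'I_K -> R) (g : 'I_K -> 'I_M -> R) (p : 'I_K -> R) : R :=
  ln (1 + \sum_(k < K) h k * p k) - \sum_(k < K) lam k * p k
  - \sum_(m < M) mu m * \sum_(k < K) g k m * p k.

Definition is_optimal {R : realType} (K M : nat) (lam : 'I_K -> R) (mu : 'I_M -> R)
  (h : 'I_K -> R) (g : 'I_K -> 'I_M -> R) (p : 'I_K -> R) : Prop :=
  (forall k, 0 <= p k) /\
  forall q : 'I_K -> R, (forall k, 0 <= q k) ->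
    objective lam mu h g q <= objective lam mu h g p.

Definition wcost {R : realType} (K M : nat) (lam : 'I_K -> R) (mu : 'I_M -> R)
  (g : 'I_K -> 'I_M -> R) (k : 'I_K) : R :=
  lam k + \sum_(m < M) mu m * g k m.

(* Main.v *)
Require Import Defs.
From HB Require Import structures.
From mathcomp Require Import all_boot all_order all_algebra.
From mathcomp Require Import all_classical all_reals all_analysis.
From mathcomp Require Import lra.
Set Implicit Arguments. Unset Strict Implicit.
Import Order.TTheory GRing.Theory Num.Theory.
Import numFieldNormedType.Exports.
Local Open Scope classical_set_scope.
Local Open Scope ring_scope.

Lemma meas_box (R : realType) (d : measure_display) (T : measurableType d)
  (n : nat) (X : T -> 'rV[R]_n) (x : 'rV[R]_n) :
  (forall j, measurable_fun [set: T] (fun w => X w ord0 j)) ->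
  measurable [set w | forall j, X w ord0 j <= x ord0 j].
Proof.
move=> mX.
have H : forall s : seq 'I_n,
    measurable [set w | forall j, j \in s -> X w ord0 j <= x ord0 j].
  elim=> [|j s IH].
    have -> : [set w | forall j, j \in [::] -> X w ord0 j <= x ord0 j] = setT.
      by apply/seteqP; split => // w _ j.
    exact: measurableT.
  have -> : [set w | forall j0, j0 \in j :: s -> X w ord0 j0 <= x ord0 j0] =
      ((fun w => X w ord0 j) @^-1` `]-oo, x ord0 j]) `&`
      [set w | forall j, j \in s -> X w ord0 j <= x ord0 j].
    apply/seteqP; split => w /=.
      move=> h; split; first by rewrite in_itv /= h // mem_head.
      by move=> j0 j0s; apply: h; rewrite in_cons j0s orbT.
    rewrite in_itv /= => -[hj hs] j0; rewrite in_cons => /orP[/eqP->//|]; exact: hs.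
  apply: measurableI => //.
  by rewrite -[X in measurable X]setTI; apply: mX.
have -> : [set w | forall j, X w ord0 j <= x ord0 j] =
  [set w | forall j, j \in enum 'I_n -> X w ord0 j <= x ord0 j].
  apply/seteqP; split => w /= h j; [by move=> _; apply: h|]. by apply: h; rewrite mem_enum.
exact: H.
Qed.

Lemma cdf_zero (R : realType) (d : measure_display) (T : measurableType d)
  (P : probability T R) (n : nat) (X : T -> 'rV[R]_n) (x : 'rV[R]_n) (j0 : 'I_n) :
  (forall w j, 0 <= X w ord0 j) -> continuous_at x (joint_cdf P X) ->
  x ord0 j0 = 0 -> joint_cdf P X x = 0.
Proof.
move=> X0 cF xj0.
pose E : 'rV[R]_n := delta_mx ord0 j0.
pose y := fun k : nat => x - harmonic k *: E.
have yx : y @ \oo --> x.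
  rewrite -[x in _ --> x]subr0; apply: cvgB; first exact: cvg_cst.
  rewrite -(scale0r E); apply: cvgZl; exact: cvg_harmonic.
have Fy : forall k, joint_cdf P X (y k) = 0.
  move=> k; rewrite /joint_cdf.
  have -> : [set w | forall j, X w ord0 j <= y k ord0 j] = set0.
    apply/seteqP; split => // w /= /(_ j0).
    rewrite /y /E !mxE xj0 /= eqxx mulr1 add0r => h.
    by move: (le_trans (X0 w j0) h); rewrite oppr_ge0 leNgt invr_gt0 ltr0n.
  by rewrite measure0.
have := @continuous_cvg _ _ _ _ _ _ _ _ cF yx.
have -> : joint_cdf P X \o y = fun=> 0 by apply/funext => k; exact: Fy.
move=> H; rewrite -(cvg_lim (@Rhausdorff R) (H _)); exact: lim_cst.
Qed.

Lemma ae_pos (R : realType) (d : measure_display) (T : measurableType d)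
  (P : probability T R) (n : nat) (X : T -> 'rV[R]_n) (j0 : 'I_n) :
  (forall j, measurable_fun [set: T] (fun w => X w ord0 j)) ->
  (forall w j, 0 <= X w ord0 j) ->
  (forall x, continuous_at x (joint_cdf P X)) ->
  {ae P, forall w, 0 < X w ord0 j0}.
Proof.
move=> mX X0 cF.
pose xk := fun k : nat => (\row_j (if j == j0 then 0 else k%:R) : 'rV[R]_n).
pose A := fun k => [set w | forall j, X w ord0 j <= xk k ord0 j].
have mA : forall k, measurable (A k) by move=> k; exact: meas_box.
have A0 : forall k, P (A k) = 0%E.
  move=> k.
  have h : joint_cdf P X (xk k) = 0.
    by apply: (@cdf_zero _ _ _ _ _ _ _ j0) => //; rewrite /xk mxE eqxx.
  rewrite -[P (A k)]fineK; last exact: fin_num_measure.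
  by move: h; rewrite /joint_cdf => ->.
apply: (@negligibleS _ _ _ P (\bigcup_k A k)).
  move=> w /= /negP; rewrite -leNgt => hw.
  exists (\sum_(j < n) Num.bound (X w ord0 j))%N; first by []. move=> j.
  rewrite /xk mxE; case: ifPn => [/eqP->//|_].
  apply: le_trans (ltW (archi_boundP (X0 w j))) _.
  rewrite ler_nat; rewrite (bigD1 j) //=; exact: leq_addr.
apply: negligible_bigcup. move=> k; exists (A k); split => //; exact: A0.
Qed.

Lemma L1 (R : realType) (k a b : R) : 0 <= k ->
  (forall s, 0 < s -> a <= b + k * s) -> a <= b.
Proof.
move=> k0 H; apply/ler_addgt0Pr => e e0.
have k1 : k + 1 != 0 by rewrite gt_eqF //; lra.
set s := e / (k + 1).
have se : s * (k + 1) = e by rewrite /s divfK.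
have s0 : 0 < s by rewrite /s divr_gt0 //; lra.
have := H s s0; nra.
Qed.

Lemma L2 (R : realType) (k a b Pm : R) : 0 <= k -> 0 < Pm ->
  (forall r, 0 < r -> r <= Pm -> b <= a + k * r) -> b <= a.
Proof.
move=> k0 P0 H; apply/ler_addgt0Pr => e e0.
have k1 : k + 1 != 0 by rewrite gt_eqF //; lra.
set s := e / (k + 1).
have se : s * (k + 1) = e by rewrite /s divfK.
have s0 : 0 < s by rewrite /s divr_gt0 //; lra.
have r0 : 0 < Num.min Pm s by rewrite lt_min P0 s0.
have rP : Num.min Pm s <= Pm by rewrite ge_min lexx.
have := H _ r0 rP => h.
have rs : Num.min Pm s <= s by rewrite ge_min lexx orbT.
nra.
Qed.

Lemma ln_diff (R : realType) (u v : R) : 0 < u -> 0 < v ->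
  (v - u) / v <= ln v - ln u.
Proof.
move=> u0 v0.
have := @le_ln1Dx R (u / v - 1).
have uv : 0 < u / v by exact: divr_gt0.
have h1 : -1 < u / v - 1 by lra.
move=> /(_ h1); rewrite addrC subrK lnM ?posrE ?invr_gt0 // lnV ?posrE //.
have -> : (v - u) / v = 1 - u / v by rewrite mulrBl divff ?gt_eqF.
lra.
Qed.

Lemma key (R : realType) (u a c s : R) : 0 < u -> 0 < u + a * s ->
  ln (u + a * s) - c * s <= ln u -> a * s <= c * s * (u + a * s).
Proof.
move=> u0 v0 h.
have := ln_diff u0 v0.
have -> : (u + a * s - u) = a * s by lra.
move=> h2; have : a * s / (u + a * s) <= c * s by lra.
by rewrite ler_pdivrMr.
Qed.

Lemma obj_eq (R : realType) (K M : nat) (lam : 'I_K -> R) (mu : 'I_M -> R)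
  (h : 'I_K -> R) (g : 'I_K -> 'I_M -> R) (q : 'I_K -> R) :
  objective lam mu h g q =
  ln (1 + \sum_(k < K) h k * q k) - \sum_(k < K) wcost lam mu g k * q k.
Proof.
rewrite /objective /wcost -addrA -opprD; congr (_ - _).
have -> : \sum_(m < M) mu m * \sum_(k < K) g k m * q k =
          \sum_(k < K) (\sum_(m < M) mu m * g k m) * q k.
  under eq_bigr do rewrite big_distrr /=.
  rewrite exchange_big /=; apply: eq_bigr => k _.
  rewrite big_distrl /=; apply: eq_bigr => m _; by rewrite mulrA.
by rewrite -big_split /=; apply: eq_bigr => k _; rewrite mulrDl.
Qed.

Lemma sum_upd (R : realType) (K : nat) (f p : 'I_K -> R) (j : 'I_K) (s : R) :
  \sum_(k < K) f k * (p k + (k == j)%:R * s) = \sum_(k < K) f k * p k + f j * s.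
Proof.
under eq_bigr do rewrite mulrDr.
rewrite big_split /=; congr (_ + _).
rewrite (bigD1 j) //= eqxx mul1r big1 ?addr0 // => k /negbTE ->.
by rewrite mul0r mulr0.
Qed.

Lemma perturb (R : realType) (K M : nat) (lam : 'I_K -> R) (mu : 'I_M -> R)
  (h : 'I_K -> R) (g : 'I_K -> 'I_M -> R) (p : 'I_K -> R) (j : 'I_K) (s : R) :
  is_optimal lam mu h g p -> 0 <= p j + s ->
  ln (1 + \sum_(k < K) h k * p k + h j * s) - wcost lam mu g j * s
  <= ln (1 + \sum_(k < K) h k * p k).
Proof.
move=> [p0 opt] hs.
pose q := fun k => p k + (k == j)%:R * s.
have q0 : forall k, 0 <= q k.
  move=> k; rewrite /q; case: (eqVneq k j) => [->|_]; first by rewrite mul1r.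
  by rewrite mul0r addr0.
have := opt q q0; rewrite !obj_eq /q !sum_upd addrA.
set C := \sum_(k < K) _ * p k; lra.
Qed.

Lemma det (R : realType) (K M : nat) (lam : 'I_K -> R) (mu : 'I_M -> R)
  (h : 'I_K -> R) (g : 'I_K -> 'I_M -> R) (p : 'I_K -> R) (i : 'I_K) :
  (forall k, 0 <= lam k) -> (forall m, 0 <= mu m) ->
  (forall k, 0 <= h k) -> (forall k m, 0 <= g k m) -> 0 < h i ->
  is_optimal lam mu h g p -> 0 < p i ->
  (forall j, j != i -> p j = 0) ->
  (forall j, j != i ->
     h j / wcost lam mu g j <= h i / wcost lam mu g i) /\
  p i = Num.max ((wcost lam mu g i)^-1 - (h i)^-1) 0.
Proof.
move=> lam0 mu0 h0 g0 hi0 opt pi0 pj0.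
have c0 : forall k, 0 <= wcost lam mu g k.
  move=> k; rewrite /wcost; apply: addr_ge0 => //.
  by apply: sumr_ge0 => m _; apply: mulr_ge0.
have hp : \sum_(k < K) h k * p k = h i * p i.
  rewrite (bigD1 i) //= big1 ?addr0 // => k ki; by rewrite pj0 // mulr0.
set u := 1 + h i * p i.
have u1 : 1 < u.
  by rewrite /u; have := mulr_gt0 hi0 pi0; lra.
have pert : forall j s, 0 <= p j + s -> 0 < u + h j * s ->
    h j * s <= wcost lam mu g j * s * (u + h j * s).
  move=> j s hs v0.
  have u0 : 0 < u by lra.
  apply: (key u0 v0).
  have := perturb opt hs.
  by rewrite hp.
set ci := wcost lam mu g i.
have ci0 : 0 <= ci by exact: c0.
have up : h i <= ci * u.
  apply: (@L1 _ (ci * h i)); first exact: mulr_ge0.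
  move=> t t0.
  have ht1 : 0 <= p i + t by lra.
  have ht2 : 0 < u + h i * t by have := mulr_gt0 hi0 t0; lra.
  have := pert i t ht1 ht2; rewrite /ci.
  set cc := wcost lam mu g i; nra.
have lo : ci * u <= h i.
  apply: (@L2 _ (ci * h i) _ _ (p i)); [exact: mulr_ge0|exact: pi0|].
  move=> r r0 rp.
  have ht1 : 0 <= p i + - r by lra.
  have hr : 0 <= h i * (p i - r) by apply: mulr_ge0; lra.
  have ht2 : 0 < u + h i * - r by rewrite /u; nra.
  have := pert i (- r) ht1 ht2; rewrite /ci.
  set cc := wcost lam mu g i; nra.
have ciu : ci * u = h i by apply/eqP; rewrite eq_le up lo.
have u0 : 0 < u by lra.
have cip : 0 < ci.
  rewrite lt_def ci0 andbT; apply/eqP => c0'; move: ciu; rewrite c0' mul0r.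
  by move=> /esym/eqP; rewrite gt_eqF.
have hic : h i / ci = u by rewrite -ciu mulrAC divff ?mul1r // gt_eqF.
split.
  move=> j ji; rewrite hic.
  have cj0 := c0 j.
  have hj : h j <= wcost lam mu g j * u.
    apply: (@L1 _ (wcost lam mu g j * h j)); first exact: mulr_ge0.
    move=> t t0.
    have ht1 : 0 <= p j + t by rewrite pj0 //; lra.
    have ht2 : 0 < u + h j * t by have := mulr_ge0 (h0 j) (ltW t0); lra.
    have := pert j t ht1 ht2.
    set cc := wcost lam mu g j; nra.
  move: cj0 hj; set cj := wcost lam mu g j; rewrite le_eqVlt => /orP[/eqP<-|cjp] hj.
    by rewrite invr0 mulr0; lra.
  by rewrite ler_pdivrMr // mulrC.
have -> : ci^-1 - (h i)^-1 = p i.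
  have -> : ci^-1 = u / h i.
    by rewrite -ciu invfM mulrC divfK // gt_eqF.
  rewrite /u mulrDl div1r mulrAC divff ?mul1r ?gt_eqF //. lra.
by rewrite max_l // ltW.
Qed.
Theorem lemma3p2 (R : realType) (d : measure_display) (T : measurableType d)
  (P : probability T R) (K M : nat) (alpha : T -> 'rV[R]_(K + K * M))
  (lam : 'I_K -> R) (mu : 'I_M -> R) :
  (forall k, 0 <= lam k) -> (forall m, 0 <= mu m) ->
  (forall j, measurable_fun [set: T] (fun w => alpha w ord0 j)) ->
  (forall w j, 0 <= alpha w ord0 j) ->
  (forall x, continuous_at x (joint_cdf P alpha)) ->
  (forall x, differentiable (joint_cdf P alpha) x) ->
  indep_components P alpha ->
  {ae P, forall w,
    let h := hval (alpha w) in
    let g := gval (alpha w) in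
    forall (p : 'I_K -> R) (i : 'I_K),
      is_optimal lam mu h g p -> 0 < p i ->
      (forall j, j != i -> p j = 0) ->
      (forall j, j != i ->
         h j / wcost lam mu g j <= h i / wcost lam mu g i) /\
      p i = Num.max ((wcost lam mu g i)^-1 - (h i)^-1) 0}.

Proof.
move=> lam0 mu0 mX X0 cF _ _.
have H : {ae P, forall w, forall i : 'I_K, 0 < alpha w ord0 (hidx M i)}.
  apply: filter_forall => i; exact: ae_pos.
apply: filterS H => w Hw /= p i opt pi0 pj0.
apply: det => //.
- by move=> k; exact: X0.
- by move=> k m; exact: X0.
- exact: Hw.
Qed.
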